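(* Under the hypotheses of Claim 4.2 (a simple graph $G'$ on $m$ vertices whose minimum degree $\delta$ satisfies $m\cdot\frac{(2\ell-1)^2-1}{(2\ell-1)^2}+\frac{4\ell-3+q}{(2\ell-1)^2}\leq\delta$ for integers $\ell\geq2$, $q\geq1$, and a cyclic enumeration $v_0,\dots,v_{m-1}$ of its vertices), let $r\in\{1,\dots,2\ell-2\}$. Then for every set $C_1=\{v_i,\dots,v_{i+r-1}\}$ of $r$ cyclically consecutive vertices there is another set $C_2=\{v_j,\dots,v_{j+r-1}\}$ of $r$ cyclically consecutive vertices, disjoint from $C_1$, such that every vertex of $C_1$ is adjacent in $G'$ to every vertex of $C_2$.
   Context: Indices are taken modulo $m$. *)

(* Defs.v *)
From mathcomp Require Import all_boot all_order all_algebra.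
Set Implicit Arguments. Unset Strict Implicit. Unset Printing Implicit Defensive.

(* A simple graph on m vertices: vertex set 'I_m, the index being the
   position in the cyclic enumeration v_0,...,v_{m-1}; adjacency e is
   symmetric and irreflexive. *)
Definition simple_graph (m : nat) (e : rel 'I_m) : Prop :=
  symmetric e /\ irreflexive e.

Definition deg (m : nat) (e : rel 'I_m) (v : 'I_m) : nat := #|[set u | e v u]|.

(* minimum degree (for m = 0 the default value m is irrelevant) *)
Definition mindeg (m : nat) (e : rel 'I_m) : nat :=
  \big[minn/m]_(v : 'I_m) deg e v.

Definition cyc_seg (m : nat) (i : 'I_m) (r : nat) : {set 'I_m} :=
  [set x : 'I_m | [exists k : 'I_r, val x == (i + k) %% m]].

(* Main.v *)
Require Import Defs.
From mathcomp Require Import all_boot all_order all_algebra.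
From mathcomp Require Import zify.
Import GRing.Theory Num.Theory.
Local Open Scope ring_scope.

Lemma card_bigcup_le (I T : finType) (A : {set I}) (F : I -> {set T}) :
  (#|\bigcup_(x in A) F x| <= \sum_(x in A) #|F x|)%N.
Proof.
apply: (big_ind2 (fun (S : {set T}) n => #|S| <= n)%N) => //.
  by rewrite cards0.
move=> S1 n1 S2 n2 H1 H2.
apply: leq_trans (leq_card_setU S1 S2) _; exact: leq_add.
Qed.

Lemma bigmin_le_seq (I : eqType) (F : I -> nat) a x (s : seq I) :
  x \in s -> (\big[minn/a]_(v <- s) F v <= F x)%N.
Proof.
elim: s => [//|y s IH]; rewrite inE big_cons => /orP[/eqP->|H].
  exact: geq_minl.
exact: leq_trans (geq_minr _ _) (IH H).
Qed.

Lemma arith (m d l q r S : nat) :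
  S = ((2 * l - 1) ^ 2)%N -> (2 <= l)%N -> (1 <= q)%N -> (d <= m)%N ->
  (m * (S - 1) + (4 * l - 3 + q) <= d * S)%N ->
  (1 <= r <= 2 * l - 2)%N -> (r * ((m - d) * r) < m)%N.
Proof.
move=> HS Hl Hq Hdm H /andP[Hr1 Hr2].
have HS1 : (r * r <= S)%N.
  rewrite HS; apply: leq_trans (leq_mul Hr2 Hr2) _.
  rewrite expnS expn1; apply: leq_mul; lia.
have HS2 : ((m - d) * S < m)%N.
  have Sp : (1 <= S)%N by rewrite HS expn_gt0; lia.
  nia.
apply: leq_ltn_trans HS2.
by rewrite mulnCA leq_mul2l HS1 orbT.
Qed.

Theorem claim4p3 (m : nat) (e : rel 'I_m) (l q r : nat) :
  simple_graph e ->
  (2 <= l)%N -> (1 <= q)%N ->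
  (m%:R : rat) * (((2 * l - 1) ^ 2 - 1)%N%:R / ((2 * l - 1) ^ 2)%N%:R)
    + (4 * l - 3 + q)%N%:R / ((2 * l - 1) ^ 2)%N%:R <= (mindeg e)%:R ->
  (1 <= r <= 2 * l - 2)%N ->
  forall i : 'I_m, exists j : 'I_m,
    [disjoint cyc_seg i r & cyc_seg j r] /\
    (forall x y, x \in cyc_seg i r -> y \in cyc_seg j r -> e x y).
Proof.
move=> [esym eirr] Hl Hq Hdeg Hr i.
set S := ((2 * l - 1) ^ 2)%N in Hdeg.
set d := mindeg e in Hdeg.
have Sp : (0 < S)%N by rewrite expn_gt0; lia.
have Hnat : (m * (S - 1) + (4 * l - 3 + q) <= d * S)%N.
  rewrite -(ler_nat rat) natrD natrM.
  move: Hdeg; rewrite mulrA -mulrDl ler_pdivrMr ?ltr0n //.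
  by rewrite natrM.
have Hdm : (forall x, d <= deg e x)%N.
  by move=> x; apply: bigmin_le_seq; rewrite mem_index_enum.
have Hdegm : forall x, (deg e x <= m)%N.
  by move=> x; rewrite /deg; apply: leq_trans (max_card _) _; rewrite card_ord.
have Hdm' : (d <= m)%N by apply: leq_trans (Hdm i) (Hdegm i).
have Harith := @arith m d l q r S erefl Hl Hq Hdm' Hnat Hr.
clearbody d S; clear Hdeg Hnat Hdm'.
move: e esym eirr Hdm Hdegm Harith i.
case: m => [|n] e esym eirr Hdm Hdegm Harith i; first by case: i.
have Hrn : (r < n.+1)%N.
  have Hdn : (deg e i <= n)%N.
    rewrite /deg; apply: leq_trans (_ : #|[set~ i]| <= n)%N; last by rewrite cardsC1 card_ord.
    apply: subset_leq_card; apply/subsetP => u; rewrite !inE; apply: contraL => /eqP->.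
    by rewrite eirr.
  have := Hdm i; move: Harith; case/andP: Hr => Hr1 _.
  case: (n.+1 - d)%N (@subnKC d n.+1) => [|t]; first by lia.
  move=> _ Ha _; apply: leq_ltn_trans Ha.
  rewrite -{1}[r]muln1 leq_mul2l; apply/orP; right; rewrite mulSn; lia.
set C1 := cyc_seg i r.
pose N x := [set y | ~~ e x y].
pose J (y : 'I_n.+1) := [set y - inord k | k : 'I_r].
pose Bad := \bigcup_(x in C1) \bigcup_(y in N x) J y.
have cardJ y : (#|J y| <= r)%N.
  by apply: leq_trans (leq_imset_card _ _) _; rewrite card_ord.
have cardN x : (#|N x| <= n.+1 - d)%N.
  have := cardsC [set u | e x u]; rewrite card_ord.
  have -> : ~: [set u | e x u] = N x by apply/setP => u; rewrite !inE.
  have := Hdm x; rewrite /deg; lia.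
have cardC1 : (#|C1| <= r)%N.
  apply: (@leq_trans #|[set i + inord k | k : 'I_r]|).
    apply: subset_leq_card; apply/subsetP => x; rewrite inE => /existsP[k /eqP Hk].
    apply/imsetP; exists k => //; apply: val_inj => /=.
    rewrite Hk inordK //; exact: ltn_trans (ltn_ord k) Hrn.
  by apply: leq_trans (leq_imset_card _ _) _; rewrite card_ord.
have cardBad : (#|Bad| < n.+1)%N.
  apply: leq_ltn_trans Harith.
  apply: leq_trans (@card_bigcup_le _ _ C1 (fun x => \bigcup_(y in N x) J y)) _.
  apply: leq_trans (_ : \sum_(x in C1) ((n.+1 - d) * r) <= _)%N.
    apply: leq_sum => x _.
    apply: leq_trans (@card_bigcup_le _ _ (N x) J) _.
    apply: leq_trans (_ : \sum_(y in N x) r <= _)%N; first exact: leq_sum.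
    by rewrite sum_nat_const leq_mul2r cardN orbT.
  by rewrite sum_nat_const leq_mul2r cardC1 orbT.
case: (pickP (fun j => j \notin Bad)) => [j Hj|Hall]; last first.
  have : (n.+1 <= #|Bad|)%N.
    rewrite -{1}(card_ord n.+1); apply: subset_leq_card; apply/subsetP => j _.
    by have := Hall j; rewrite /= => /negbFE.
  by rewrite leqNgt cardBad.
have Hadj : forall x y, x \in C1 -> y \in cyc_seg j r -> e x y.
  move=> x y Hx Hy; apply/negPn/negP => Hn.
  move/negP: Hj; apply; apply/bigcupP; exists x => //.
  apply/bigcupP; exists y; first by rewrite inE.
  move: Hy; rewrite inE => /existsP[k /eqP Hk].
  apply/imsetP; exists k => //.
  have -> : y = j + inord k.
    apply: val_inj => /=; rewrite Hk inordK //; exact: ltn_trans (ltn_ord k) Hrn.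
  by rewrite addrK.
exists j; split => //.
apply/pred0P => z /=; apply/negP => /andP[Hz1 Hz2].
by have := Hadj z z Hz1 Hz2; rewrite eirr.
Qed.
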